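(* Let $\mathcal O=\mathbb Z_p[\mathrm{Im}\,\psi]$ for a character $\psi$ of a finite abelian group with values in $\overline{\mathbb Q}_p^\times$, with uniformizer $\pi$, let $\Gamma\cong\mathbb Z_p^2$ with topological generators $\gamma_1,\gamma_2$, and $\Lambda=\mathcal O[[\Gamma]]$. Let $\mathcal E=\{(a_1,a_2)\in\mathbb Z_p^2: a_1\mathbb Z_p+a_2\mathbb Z_p=\mathbb Z_p\}$. If $(a_1,a_2),(b_1,b_2)\in\mathcal E$ satisfy $(\gamma_1^{a_1}\gamma_2^{a_2}-1,\pi)=(\gamma_1^{b_1}\gamma_2^{b_2}-1,\pi)$ as ideals of $\Lambda$, then there exists $e\in\mathbb Z_p^\times$ with $(b_1,b_2)=(ea_1,ea_2)$. *)

(* Defs.v *)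
From mathcomp Require Import all_boot all_algebra.
Set Implicit Arguments. Unset Strict Implicit. Unset Printing Implicit Defensive.
Import GRing.Theory.
Local Open Scope ring_scope.

(* ---------- p-adic integers Z_p ----------
   An element of Z_p is represented by its canonical sequence of residues:
   a n is the representative in [0, p^n) of a mod p^n, and the sequence is
   compatible.  Two elements are equal iff their sequences agree pointwise. *)
Definition zp (p : nat) (a : nat -> nat) : Prop :=
  forall n, (a n < p ^ n)%N /\ (a n.+1 = a n %[mod p ^ n])%N.

Definition zeq (a b : nat -> nat) : Prop := forall n, a n = b n.
Definition zadd (p : nat) (a b : nat -> nat) : nat -> nat :=
  fun n => ((a n + b n) %% p ^ n)%N.
Definition zmul (p : nat) (a b : nat -> nat) : nat -> nat :=
  fun n => ((a n * b n) %% p ^ n)%N.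
Definition zone (p : nat) : nat -> nat := fun n => (1 %% p ^ n)%N.

Definition zunit (p : nat) (e : nat -> nat) : Prop :=
  exists e', zp p e' /\ zeq (zmul p e e') (zone p).

Definition zgen_unit_ideal (p : nat) (a1 a2 : nat -> nat) : Prop :=
  exists u v, zp p u /\ zp p v /\
    zeq (zadd p (zmul p u a1) (zmul p v a2)) (zone p).

(* the p-adic binomial coefficient binom(a, k) in Z_p: binom(., k) is
   p-adically continuous, x = y mod p^(n + v_p(k!)) implies
   binom(x,k) = binom(y,k) mod p^n. *)
Definition zbinom (p : nat) (a : nat -> nat) (k : nat) : nat -> nat :=
  fun n => ('C(a (n + logn p k`!)%N, k) %% p ^ n)%N.

Definition padic_int_ring (p : nat) (O : idomainType) (pi : O) : Prop :=
  pi != 0 /\ pi \isn't a GRing.unit /\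
  (forall x : O, x != 0 ->
     exists u n, u \is a GRing.unit /\ x = u * pi ^+ n) /\
  (forall n : nat, (0 < n)%N -> (n%:R : O) != 0) /\
  (exists c : O, p%:R = pi * c) /\
  (exists s : seq O, forall x : O,
     exists y, y \in s /\ exists c, x - y = pi * c) /\
  (forall x : nat -> O,
    (forall n, exists c, x n.+1 - x n = pi ^+ n * c) ->
    exists l, forall n, exists c, l - x n = pi ^+ n * c).

Definition zp_embedding (p : nat) (O : idomainType) (iota : (nat -> nat) -> O) : Prop :=
  forall a, zp p a -> forall n, exists c : O, iota a - (a n)%:R = (p%:R) ^+ n * c.

(* ---------- Lambda = O[[Gamma]] = O[[T1,T2]], gamma_i = 1 + T_i ---------- *)
Definition ps2 (R : Type) := nat -> nat -> R.

Definition ps_add (R : ringType) (f g : ps2 R) : ps2 R := fun i j => f i j + g i j.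
Definition ps_sub (R : ringType) (f g : ps2 R) : ps2 R := fun i j => f i j - g i j.
Definition ps_mul (R : ringType) (f g : ps2 R) : ps2 R :=
  fun i j => \sum_(k < i.+1) \sum_(l < j.+1) f k l * g (i - k)%N (j - l)%N.
Definition ps_const (R : ringType) (c : R) : ps2 R :=
  fun i j => if (i == 0)%N && (j == 0)%N then c else 0.

Definition ideal2 (R : ringType) (f g : ps2 R) (x : ps2 R) : Prop :=
  exists u v : ps2 R, forall i j, x i j = ps_add (ps_mul u f) (ps_mul v g) i j.

(* gamma_1^a1 gamma_2^a2 = (1+T1)^a1 (1+T2)^a2
   = sum_{i,j} binom(a1,i) binom(a2,j) T1^i T2^j *)
Definition gamma_pow (p : nat) (O : idomainType) (iota : (nat -> nat) -> O)
  (a1 a2 : nat -> nat) : ps2 O :=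
  fun i j => iota (zbinom p a1 i) * iota (zbinom p a2 j).

Definition gamma_pow_m1 (p : nat) (O : idomainType) (iota : (nat -> nat) -> O)
  (a1 a2 : nat -> nat) : ps2 O :=
  ps_sub (gamma_pow p iota a1 a2) (ps_const 1).

(* Main.v *)
Require Import Defs.
From mathcomp Require Import all_boot all_algebra ring.
Import GRing.Theory.
Local Open Scope ring_scope.
Set Implicit Arguments. Unset Strict Implicit.

Lemma cong_mul (m x x' y y' : nat) : x = x' %[mod m] -> y = y' %[mod m] ->
  (x * y = x' * y' %[mod m])%N.
Proof. by move=> hx hy; rewrite -modnMm hx hy modnMm. Qed.

Lemma cong_add (m x x' y y' : nat) : x = x' %[mod m] -> y = y' %[mod m] ->
  (x + y = x' + y' %[mod m])%N.
Proof. by move=> hx hy; rewrite -modnDm hx hy modnDm. Qed.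

Lemma zp_mod p a m n : zp p a -> (n <= m)%N -> a m = a n %[mod p ^ n].
Proof.
move=> za; elim: m => [|m IH] hnm.
  by move: hnm; rewrite leqn0 => /eqP ->.
case: (ltngtP n m.+1) hnm => // [hlt _|-> //].
have hnm : (n <= m)%N by [].
rewrite -IH // -(modn_dvdm _ (dvdn_exp2l p hnm)) (proj2 (za m)).
by rewrite (modn_dvdm _ (dvdn_exp2l p hnm)).
Qed.

Lemma ffact_cong d x t k : ((x + d * t) ^_ k = x ^_ k %[mod d])%N.
Proof.
elim: k x => [|k IH] x //.
case: x => [|x].
  rewrite add0n ffact0n /= ffactnS -mulnA.
  by rewrite modnMr mod0n.
rewrite addSn !ffactSS; apply: cong_mul; last exact: IH.
by rewrite -addSn mulnC addnC modnMDl.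
Qed.

Lemma mod_cancel_coprime m u x y : coprime u m ->
  (x * u = y * u %[mod m])%N -> (x = y %[mod m])%N.
Proof.
move=> cu.
wlog le : x y / (x <= y)%N.
  move=> W; case: (leqP x y) => h; first exact: W.
  by move=> /esym H; apply/esym; apply: W => //; apply: ltnW.
move=> /eqP; rewrite eq_sym eqn_mod_dvd; last by rewrite leq_mul2r le orbT.
rewrite -mulnBl Gauss_dvdl; last by rewrite coprime_sym.
by rewrite -eqn_mod_dvd // => /eqP /esym.
Qed.

Lemma bin_cong p n k x y : prime p ->
  x = y %[mod p ^ (n + logn p k`!)] -> ('C(x, k) = 'C(y, k) %[mod p ^ n])%N.
Proof.
move=> pp.
wlog le : x y / (x <= y)%N.
  move=> W; case: (leqP x y) => h; first exact: W.
  by move=> /esym H; apply/esym; apply: W => //; apply: ltnW.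
move=> /eqP; rewrite eq_sym eqn_mod_dvd // => /dvdnP [t ht].
have hy : y = (x + p ^ (n + logn p k`!) * t)%N by rewrite mulnC -ht subnKC.
have [u cu hk] := pfactor_coprime pp (fact_gt0 k).
have H1 : ('C(y, k) * k`! = 'C(x, k) * k`! %[mod p ^ (n + logn p k`!)])%N.
  by rewrite !bin_ffact hy ffact_cong.
apply/esym; apply: (@mod_cancel_coprime _ u).
  by apply: coprimeXr; rewrite coprime_sym.
have pg : (0 < p ^ logn p k`!)%N by rewrite expn_gt0 prime_gt0.
apply/eqP; rewrite -(eqn_pmul2r pg) !muln_modl -expnD.
rewrite -!mulnA -hk; exact/eqP.
Qed.

Lemma zp_zbinom p a k : prime p -> zp p a -> zp p (zbinom p a k).
Proof.
move=> pp za n; split.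
  by rewrite /zbinom ltn_pmod // expn_gt0 prime_gt0.
rewrite /zbinom (modn_dvdm _ (dvdn_exp2l p (leqnSn n))) modn_mod.
apply: bin_cong => //.
by rewrite addSn (@zp_mod p a _ _ za) // leqnSn.
Qed.

Lemma dvd_bin_pow p N t : prime p -> (0 < t < p ^ N)%N -> (p %| 'C(p ^ N, t))%N.
Proof.
move=> pp /andP [t0 tlt].
destruct t as [|m]; first by [].
apply: contraT => ndv.
have cp : coprime (p ^ N) ('C(p ^ N, m.+1)).
  by apply: coprimeXl; rewrite prime_coprime.
have : (p ^ N %| m.+1 * 'C(p ^ N, m.+1))%N.
  by rewrite -mul_bin_diag dvdn_mulr.
rewrite Gauss_dvdl // => /dvdn_leq => /(_ isT).
by rewrite leqNgt tlt.
Qed.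

Definition inP (O : idomainType) (pi x : O) := exists c, x = pi * c.

Lemma inP0 (O : idomainType) (pi : O) : inP pi 0.
Proof. by exists 0; rewrite mulr0. Qed.
Lemma inPD (O : idomainType) (pi x y : O) : inP pi x -> inP pi y -> inP pi (x + y).
Proof. by move=> [c ->] [d ->]; exists (c + d); rewrite mulrDr. Qed.
Lemma inPN (O : idomainType) (pi x : O) : inP pi x -> inP pi (- x).
Proof. by move=> [c ->]; exists (- c); rewrite mulrN. Qed.
Lemma inPB (O : idomainType) (pi x y : O) : inP pi x -> inP pi y -> inP pi (x - y).
Proof. by move=> hx hy; apply: inPD => //; apply: inPN. Qed.
Lemma inPMl (O : idomainType) (pi x y : O) : inP pi y -> inP pi (x * y).
Proof. by move=> [c ->]; exists (x * c); rewrite mulrCA. Qed.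
Lemma inPMr (O : idomainType) (pi x y : O) : inP pi x -> inP pi (x * y).
Proof. by move=> hx; rewrite mulrC; apply: inPMl. Qed.
Lemma inP_sum (O : idomainType) (pi : O) (I : Type) (r : seq I) (P : pred I) (F : I -> O) :
  (forall i, P i -> inP pi (F i)) -> inP pi (\sum_(i <- r | P i) F i).
Proof. by move=> h; apply: (big_ind (inP pi)) => //; [apply: inP0 | move=> x y; apply: inPD]. Qed.

Definition RM (O : idomainType) (pi : O) (M : nat) (q : {poly O}) :=
  forall t, (t < M)%N -> inP pi q`_t.
Definition ZM (O : idomainType) (M : nat) (q : {poly O}) :=
  forall t, (t < M)%N -> q`_t = 0.

Lemma RMD (O : idomainType) (pi : O) M q r : RM pi M q -> RM pi M r -> RM pi M (q + r).
Proof. by move=> hq hr t ht; rewrite coefD; apply: inPD; [apply: hq|apply: hr]. Qed.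
Lemma RMB (O : idomainType) (pi : O) M q r : RM pi M q -> RM pi M r -> RM pi M (q - r).
Proof. by move=> hq hr t ht; rewrite coefB; apply: inPB; [apply: hq|apply: hr]. Qed.
Lemma RMMl (O : idomainType) (pi : O) M q r : RM pi M q -> RM pi M (r * q).
Proof.
move=> hq t ht; rewrite coefM; apply: inP_sum => j _; apply: inPMl; apply: hq.
by apply: leq_ltn_trans ht; apply: leq_subr.
Qed.
Lemma RMMr (O : idomainType) (pi : O) M q r : RM pi M q -> RM pi M (q * r).
Proof. by rewrite mulrC; apply: RMMl. Qed.
Lemma RM_sum (O : idomainType) (pi : O) M (I : Type) (r : seq I) (P : pred I) (F : I -> {poly O}) :
  (forall i, P i -> RM pi M (F i)) -> RM pi M (\sum_(i <- r | P i) F i).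
Proof.
move=> h t ht; rewrite coef_sum; apply: inP_sum => i Pi; exact: h.
Qed.
Lemma ZM_RM (O : idomainType) (pi : O) M q : ZM M q -> RM pi M q.
Proof. by move=> h t ht; rewrite h //; apply: inP0. Qed.

Lemma ZMD (O : idomainType) M (q r : {poly O}) : ZM M q -> ZM M r -> ZM M (q + r).
Proof. by move=> hq hr t ht; rewrite coefD hq // hr // addr0. Qed.
Lemma ZMMl (O : idomainType) M (q r : {poly O}) : ZM M q -> ZM M (r * q).
Proof.
move=> hq t ht; rewrite coefM big1 // => j _; rewrite hq ?mulr0 //.
by apply: leq_ltn_trans ht; apply: leq_subr.
Qed.
Lemma ZMMr (O : idomainType) M (q r : {poly O}) : ZM M q -> ZM M (q * r).
Proof. by rewrite mulrC; apply: ZMMl. Qed.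
Lemma ZM_sum (O : idomainType) M (I : Type) (r : seq I) (P : pred I) (F : I -> {poly O}) :
  (forall i, P i -> ZM M (F i)) -> ZM M (\sum_(i <- r | P i) F i).
Proof.
move=> h t ht; rewrite coef_sum big1 // => i Pi; exact: h.
Qed.
Lemma ZM_XW (O : idomainType) M (W : {poly O}) i : (M <= i)%N -> ZM M (('X * W) ^+ i).
Proof.
move=> hi t ht; rewrite exprMn -(subnKC hi) exprD -mulrA coefXnM ht //.
Qed.

Definition P2 (O : idomainType) (M : nat) (f : ps2 O) : {poly {poly O}} :=
  \poly_(i < M) \poly_(j < M) f i j.

Lemma P2_coef (O : idomainType) M (f : ps2 O) i j : (i < M)%N -> (j < M)%N ->
  (P2 M f)`_i`_j = f i j.
Proof. by move=> hi hj; rewrite /P2 coef_poly hi coef_poly hj. Qed.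

Lemma P2_ext (O : idomainType) M (f g : ps2 O) : (forall i j, f i j = g i j) -> P2 M f = P2 M g.
Proof.
move=> h; apply/polyP => i; rewrite /P2 !coef_poly; case: ifP => // _.
by apply/polyP => j; rewrite !coef_poly; case: ifP => // _; apply: h.
Qed.

Lemma P2_add (O : idomainType) M (f g : ps2 O) : P2 M (ps_add f g) = P2 M f + P2 M g.
Proof.
apply/polyP => i; rewrite coefD /P2 !coef_poly; case: ifP => _; last by rewrite addr0.
by apply/polyP => j; rewrite coefD !coef_poly; case: ifP => _; rewrite ?addr0.
Qed.

Lemma P2_sub (O : idomainType) M (f g : ps2 O) : P2 M (ps_sub f g) = P2 M f - P2 M g.
Proof.
apply/polyP => i; rewrite coefB /P2 !coef_poly; case: ifP => _; last by rewrite subr0.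
by apply/polyP => j; rewrite coefB !coef_poly; case: ifP => _; rewrite ?subr0.
Qed.

Lemma P2_const (O : idomainType) M (c : O) : (0 < M)%N -> P2 M (ps_const c) = (c%:P)%:P.
Proof.
move=> M0; apply/polyP => i; apply/polyP => j.
rewrite /P2 !coefC !coef_poly /ps_const.
case: i => [|i] /=; rewrite ?M0.
  by rewrite coef_poly coefC; case: j => [|j] /=; rewrite ?M0 //; case: ifP.
case: ifP => _; last by rewrite coef0.
by rewrite coef_poly coef0; case: ifP.
Qed.

Lemma P2_mul (O : idomainType) M (u f : ps2 O) i j : (i < M)%N -> (j < M)%N ->
  (P2 M (ps_mul u f))`_i`_j = (P2 M u * P2 M f)`_i`_j.
Proof.
move=> hi hj; rewrite P2_coef // coefM coef_sum /ps_mul.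
apply: eq_bigr => k _; rewrite coefM; apply: eq_bigr => l _.
have hk : (k < M)%N by apply: leq_ltn_trans hi; rewrite -ltnS.
have hl : (l < M)%N by apply: leq_ltn_trans hj; rewrite -ltnS.
have hik : (i - k < M)%N by apply: leq_ltn_trans hi; apply: leq_subr.
have hjl : (j - l < M)%N by apply: leq_ltn_trans hj; apply: leq_subr.
by rewrite !P2_coef.
Qed.

Definition phi (O : idomainType) (Y1 Y2 : {poly O}) (Q : {poly {poly O}}) : {poly O} :=
  (map_poly (comp_poly Y2) Q).[Y1].

Lemma phiM (O : idomainType) (Y1 Y2 : {poly O}) Q R : phi Y1 Y2 (Q * R) = phi Y1 Y2 Q * phi Y1 Y2 R.
Proof. by rewrite /phi rmorphM hornerM. Qed.
Lemma phiD (O : idomainType) (Y1 Y2 : {poly O}) Q R : phi Y1 Y2 (Q + R) = phi Y1 Y2 Q + phi Y1 Y2 R.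
Proof. by rewrite /phi rmorphD hornerD. Qed.
Lemma phiB (O : idomainType) (Y1 Y2 : {poly O}) Q R : phi Y1 Y2 (Q - R) = phi Y1 Y2 Q - phi Y1 Y2 R.
Proof. by rewrite /phi rmorphB hornerD hornerN. Qed.
Lemma phiCC (O : idomainType) (Y1 Y2 : {poly O}) (c : O) : phi Y1 Y2 ((c%:P)%:P) = c%:P.
Proof. by rewrite /phi map_polyC hornerC /= comp_polyC. Qed.
Lemma phiC (O : idomainType) (Y1 Y2 : {poly O}) (B : {poly O}) : phi Y1 Y2 (B%:P) = B \Po Y2.
Proof. by rewrite /phi map_polyC hornerC. Qed.
Lemma phi_mapC (O : idomainType) (Y1 Y2 : {poly O}) (A : {poly O}) :
  phi Y1 Y2 (map_poly polyC A) = A \Po Y1.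
Proof.
rewrite /phi -map_poly_comp /comp_poly; congr (_.[Y1]).
by apply: eq_map_poly => c /=; rewrite comp_polyC.
Qed.

Lemma ZM_comp (O : idomainType) M (D W : {poly O}) : (forall j, (j < M)%N -> D`_j = 0) ->
  ZM M (D \Po ('X * W)).
Proof.
move=> hD; rewrite comp_polyE; apply: ZM_sum => j _.
case: (ltnP j M) => hj; first by rewrite hD // scale0r => t _; rewrite coef0.
by rewrite -mul_polyC; apply: ZMMl; apply: ZM_XW.
Qed.

Lemma RM_comp (O : idomainType) (pi : O) M (D W : {poly O}) :
  (forall j, (j < M)%N -> inP pi D`_j) -> RM pi M (D \Po ('X * W)).
Proof.
move=> hD; rewrite comp_polyE; apply: RM_sum => j _.
case: (ltnP j M) => hj.
  by move=> t ht; rewrite coefZ; apply: inPMr; apply: hD.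
by apply: ZM_RM; rewrite -mul_polyC; apply: ZMMl; apply: ZM_XW.
Qed.

Lemma phi_ZM (O : idomainType) M (W1 W2 : {poly O}) (D : {poly {poly O}}) :
  (forall i j, (i < M)%N -> (j < M)%N -> D`_i`_j = 0) ->
  ZM M (phi ('X * W1) ('X * W2) D).
Proof.
move=> hD; rewrite /phi horner_coef; apply: ZM_sum => i _.
rewrite coef_map /=.
case: (ltnP i M) => hi.
  by apply: ZMMr; apply: ZM_comp => j hj; apply: hD.
by apply: ZMMl; apply: ZM_XW.
Qed.

Lemma coef_1X (O : idomainType) n i : ((1 + 'X : {poly O}) ^+ n)`_i = ('C(n, i))%:R.
Proof.
elim: n i => [|n IH] i.
  by rewrite expr0 coef1; case: i.
rewrite exprSr mulrDr mulr1 coefD coefMX IH.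
case: i => [|i] /=; first by rewrite addr0 !bin0.
by rewrite IH binS natrD.
Qed.

Lemma inP_nat_dvd (O : idomainType) (pi c0 : O) p n : p%:R = pi * c0 -> (p %| n)%N ->
  inP pi (n%:R : O).
Proof.
move=> hp /dvdnP [k ->]; rewrite natrM hp; apply: inPMl; exists c0; by [].
Qed.

Lemma not_inP1 (O : idomainType) (pi : O) : pi \isn't a GRing.unit -> ~ inP pi 1.
Proof. by move=> /negP nu [c hc]; apply: nu; apply/unitrPr; exists c. Qed.

Lemma nat_notdvd (O : idomainType) (pi c0 : O) p n : prime p -> p%:R = pi * c0 ->
  pi \isn't a GRing.unit -> ~~ (p %| n)%N -> ~ inP pi (n%:R : O).
Proof.
move=> pp hp nu nd hn.
have n0 : (0 < n)%N by case: n nd hn => //; rewrite dvdn0.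
have g1 : gcdn n p = 1%N.
  by apply/eqP; have : coprime n p by rewrite coprime_sym prime_coprime.
case: (egcdnP p n0) => km kn e _.
rewrite g1 in e.
apply: (not_inP1 nu).
have -> : (1 : O) = (km * n)%:R - (kn * p)%:R by rewrite e natrD; ring.
apply: inPB; rewrite natrM; first by apply: inPMl.
by apply: inPMl; exists c0.
Qed.

Lemma inP_natcong (O : idomainType) (pi c0 : O) p x y : p%:R = pi * c0 ->
  (x = y %[mod p])%N -> inP pi (x%:R - y%:R : O).
Proof.
move=> hp.
wlog le : x y / (x <= y)%N.
  move=> W; case: (leqP x y) => h; first exact: W.
  move=> /esym H; rewrite -opprB; apply: inPN; apply: W => //; exact: ltnW.
move=> /eqP; rewrite eq_sym eqn_mod_dvd // => hd.
rewrite -opprB -natrB //; apply: inPN; exact: inP_nat_dvd hp hd.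
Qed.

Lemma RM_pow (O : idomainType) (pi c0 : O) p N k : prime p -> p%:R = pi * c0 ->
  RM pi (p ^ N) ((1 + 'X) ^+ (p ^ N * k) - 1).
Proof.
move=> pp hp.
have H1 : RM pi (p ^ N) ((1 + 'X : {poly O}) ^+ (p ^ N) - 1).
  move=> t ht; rewrite coefB coef_1X coef1.
  case: t ht => [|t] ht; first by rewrite bin0 subrr; apply: inP0.
  rewrite subr0; apply: (inP_nat_dvd hp); apply: dvd_bin_pow => //.
rewrite exprM -(expr1n _ k) subrXX expr1n; exact: RMMr.
Qed.

Lemma RM_div (O : idomainType) (pi c0 : O) p N m : prime p -> p%:R = pi * c0 ->
  pi \isn't a GRing.unit -> RM pi (p ^ N) ((1 + 'X) ^+ m - 1) -> (p ^ N %| m)%N.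
Proof.
move=> pp hp nu H.
have M0 : (0 < p ^ N)%N by rewrite expn_gt0 prime_gt0.
set r := (m %% p ^ N)%N.
have Hr : RM pi (p ^ N) ((1 + 'X : {poly O}) ^+ r - 1).
  have em : m = (r + p ^ N * (m %/ p ^ N))%N by rewrite /r addnC mulnC -divn_eq.
  have gen : forall a b, (1 + 'X : {poly O}) ^+ a - 1 =
     ((1 + 'X) ^+ (a + b) - 1) - (1 + 'X) ^+ a * ((1 + 'X) ^+ b - 1).
    by move=> a b; rewrite exprD; ring.
  rewrite (gen r (p ^ N * (m %/ p ^ N))%N) -em.
  apply: RMB => //; apply: RMMl; exact: RM_pow pp hp.
rewrite /dvdn; apply: contraT => rn0.
have hr : (r < p ^ N)%N by rewrite ltn_pmod.
have := Hr r hr; rewrite coefB coef_1X binn coef1.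
have -> : (r == 0%N) = false by apply/negbTE.
rewrite subr0 => h; exfalso; exact: (not_inP1 nu).
Qed.

Lemma alpha_cong (O : idomainType) (pi c0 : O) p (iota : (nat -> nat) -> O) a K i :
  prime p -> p%:R = pi * c0 -> zp_embedding p iota -> zp p a ->
  (1 + logn p i`! <= K)%N -> inP pi (iota (zbinom p a i) - ('C(a K, i))%:R).
Proof.
move=> pp hp hiota za hK.
have zb := zp_zbinom i pp za.
have [c hc] := hiota _ zb 1%N.
have -> : iota (zbinom p a i) - ('C(a K, i))%:R =
   (iota (zbinom p a i) - (zbinom p a i 1%N)%:R) + ((zbinom p a i 1%N)%:R - ('C(a K, i))%:R).
  by ring.
apply: inPD.
  by rewrite hc expr1 hp -mulrA; exists (c0 * c).
apply: (inP_natcong hp).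
rewrite /zbinom expn1 modn_mod.
have := @bin_cong p 1 i (a (1 + logn p i`!)%N) (a K) pp.
rewrite expn1; apply.
by apply/esym; apply: zp_mod.
Qed.

Definition Wc (O : idomainType) (c : nat) : {poly O} :=
  \sum_(i < c) (1 + 'X) ^+ (c.-1 - i) * 1 ^+ i.

Lemma YcE (O : idomainType) c : (1 + 'X : {poly O}) ^+ c - 1 = 'X * Wc O c.
Proof. by rewrite -{2}(expr1n _ c) subrXX addrAC subrr add0r. Qed.

Lemma compE (O : idomainType) (A c : nat) :
  ((1 + 'X : {poly O}) ^+ A \Po ('X * Wc O c)) = (1 + 'X) ^+ (c * A).
Proof.
rewrite -YcE rmorphXn rmorphD rmorph1 /= comp_polyX addrC subrK.
by rewrite exprM.
Qed.

Definition Ap (O : idomainType) p (iota : (nat -> nat) -> O) M (a : nat -> nat) : {poly O} :=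
  \poly_(i < M) iota (zbinom p a i).

Lemma P2_gamma (O : idomainType) p (iota : (nat -> nat) -> O) M a1 a2 :
  P2 M (gamma_pow p iota a1 a2) = map_poly polyC (Ap p iota M a1) * (Ap p iota M a2)%:P.
Proof.
apply/polyP => i; apply/polyP => j.
rewrite coefMC coef_map /= coefCM /P2 /Ap !coef_poly.
case: ifP => hi; last by rewrite coef0 mul0r.
by rewrite coef_poly; case: ifP => hj; rewrite ?mulr0.
Qed.

Lemma gamma_RM (O : idomainType) (pi c0 : O) p (iota : (nat -> nat) -> O) N a1 a2 c1 c2 K :
  prime p -> p%:R = pi * c0 -> zp_embedding p iota -> zp p a1 -> zp p a2 ->
  (forall i, (i < p ^ N)%N -> (1 + logn p i`! <= K)%N) ->
  RM pi (p ^ N) (phi ('X * Wc O c1) ('X * Wc O c2) (P2 (p ^ N) (gamma_pow p iota a1 a2))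
     - (1 + 'X) ^+ (c1 * a1 K + c2 * a2 K)).
Proof.
move=> pp hp hiota za1 za2 hK.
rewrite P2_gamma phiM phi_mapC phiC.
set x1 := Ap _ _ _ a1 \Po _; set x2 := Ap _ _ _ a2 \Po _.
rewrite exprD -!compE.
set e1 := _ \Po _; set e2 := (_ \Po _).
have -> : x1 * x2 - e1 * e2 = (x1 - e1) * x2 + e1 * (x2 - e2) by ring.
have key : forall a c, zp p a -> RM pi (p ^ N)
   (Ap p iota (p ^ N) a \Po ('X * Wc O c) - ((1 + 'X) ^+ a K \Po ('X * Wc O c))).
  move=> a c za; rewrite -comp_polyB; apply: RM_comp => j hj.
  rewrite coefB coef_1X /Ap coef_poly hj.
  exact: (alpha_cong pp hp hiota za (hK j hj)).
apply: RMD; first by apply: RMMr; apply: key.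
by apply: RMMl; apply: key.
Qed.

Lemma ps_mul1 (O : idomainType) (f : ps2 O) i j : ps_mul (ps_const 1) f i j = f i j.
Proof.
rewrite /ps_mul big_ord_recl big_ord_recl /= !subn0 mul1r.
rewrite big1 ?addr0; last by move=> l _; rewrite /ps_const /= mul0r.
rewrite big1 ?addr0 // => k _; rewrite big1 // => l _; by rewrite /ps_const /= mul0r.
Qed.

Lemma ps_mul0 (O : idomainType) (f : ps2 O) i j : ps_mul (fun _ _ => 0) f i j = 0.
Proof. by rewrite /ps_mul big1 // => k _; rewrite big1 // => l _; rewrite mul0r. Qed.

Lemma main_div (O : idomainType) (pi : O) (iota : (nat -> nat) -> O) p a1 a2 b1 b2 N :
  prime p -> padic_int_ring p pi -> zp_embedding p iota ->
  zp p a1 -> zp p a2 -> zp p b1 -> zp p b2 ->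
  (forall x : ps2 O,
     ideal2 (gamma_pow_m1 p iota a1 a2) (ps_const pi) x <->
     ideal2 (gamma_pow_m1 p iota b1 b2) (ps_const pi) x) ->
  (p ^ N %| a2 (N.+1 + logn p (p ^ N)`!) * b1 (N.+1 + logn p (p ^ N)`!)
     + (p ^ N - 1) * a1 (N.+1 + logn p (p ^ N)`!) * b2 (N.+1 + logn p (p ^ N)`!))%N.
Proof.
move=> pp hO hiota za1 za2 zb1 zb2 H.
have [pi0 [nu [_ [_ [[c0 hp] _]]]]] := hO.
set M := (p ^ N)%N.
have M0 : (0 < M)%N by rewrite expn_gt0 prime_gt0.
set K := (N.+1 + logn p M`!)%N.
have hK : forall i, (i < M)%N -> (1 + logn p i`! <= K)%N.
  move=> i hi; rewrite /K; apply: leq_add => //.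
  apply: dvdn_leq_log; first exact: fact_gt0.
  by rewrite (fact_split (ltnW hi)) dvdn_mulr.
set c1 := a2 K; set c2 := ((M - 1) * a1 K)%N.
set Phi := phi ('X * Wc O c1) ('X * Wc O c2).
set ga := gamma_pow_m1 p iota a1 a2; set gb := gamma_pow_m1 p iota b1 b2.
set cp := ps_const pi.
have [u [v huv]] : ideal2 ga cp gb.
  apply/H; exists (ps_const 1), (fun _ _ => 0) => i j.
  by rewrite /ps_add ps_mul1 ps_mul0 addr0.
have Hcp : RM pi M (Phi (P2 M cp)).
  rewrite /cp P2_const // /Phi phiCC => t _; rewrite coefC.
  case: ifP => _; last exact: inP0.
  by exists 1; rewrite mulr1.
have ema : (c1 * a1 K + c2 * a2 K = M * (a1 K * a2 K))%N.
  rewrite /c1 /c2 -mulnA (mulnC (a2 K)) -[in RHS](subnK M0) mulnDl mul1n.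
  by rewrite addnC.
have Hga : RM pi M (Phi (P2 M ga)).
  rewrite /ga /gamma_pow_m1 P2_sub P2_const // /Phi phiB phiCC.
  have -> : forall x : {poly O}, x - 1 =
      (x - (1 + 'X) ^+ (c1 * a1 K + c2 * a2 K)) + ((1 + 'X) ^+ (c1 * a1 K + c2 * a2 K) - 1).
    by move=> x; ring.
  apply: RMD; first exact: gamma_RM pp hp hiota za1 za2 hK.
  by rewrite ema; apply: RM_pow pp hp.
have Hgb : RM pi M (Phi (P2 M gb)).
  set D := P2 M (ps_mul u ga) + P2 M (ps_mul v cp) - (P2 M u * P2 M ga + P2 M v * P2 M cp).
  have hD : ZM M (Phi D).
    apply: phi_ZM => i j hi hj.
    by rewrite /D !(coefB, coefD) !P2_mul // subrr.
  have -> : P2 M gb = D + (P2 M u * P2 M ga + P2 M v * P2 M cp).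
    by rewrite /D subrK -P2_add; apply: P2_ext.
  clearbody D; rewrite /Phi phiD phiD !phiM.
  apply: RMD; first exact: ZM_RM.
  by apply: RMD; apply: RMMl.
have Hm : RM pi M ((1 + 'X) ^+ (c1 * b1 K + c2 * b2 K) - 1).
  have hgb : Phi (P2 M gb) = Phi (P2 M (gamma_pow p iota b1 b2)) - 1.
    by rewrite /gb /gamma_pow_m1 P2_sub P2_const // /Phi phiB phiCC.
  have -> : (1 + 'X : {poly O}) ^+ (c1 * b1 K + c2 * b2 K) - 1 =
     Phi (P2 M gb) - (Phi (P2 M (gamma_pow p iota b1 b2)) - (1 + 'X) ^+ (c1 * b1 K + c2 * b2 K)).
    by rewrite hgb; ring.
  apply: RMB => //; exact: gamma_RM pp hp hiota zb1 zb2 hK.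
have := RM_div pp hp nu Hm.
by [].
Qed.

Lemma cong_dvd (m d x y : nat) : (d %| m)%N -> x = y %[mod m] -> x = y %[mod d].
Proof. by move=> h e; rewrite -(modn_dvdm x h) e modn_dvdm. Qed.

Lemma cong_trans (m x y z : nat) : x = y %[mod m] -> y = z %[mod m] -> x = z %[mod m].
Proof. by move=> -> ->. Qed.

Definition inv (x m : nat) := (egcdn x m).1.

Lemma invP x m : coprime x m -> (x * inv x m = 1 %[mod m])%N.
Proof.
case: x => [|x] cx.
  by move: cx; rewrite /coprime gcd0n => /eqP ->; rewrite !modn1.
rewrite /inv; case: (egcdnP m (ltn0Sn x)) => km kn e _ /=.
move/eqP: cx => g; rewrite g in e.
by rewrite mulnC e modnMDl.
Qed.

Lemma inv_uniq m x y y' : (x * y = 1 %[mod m])%N -> (x * y' = 1 %[mod m])%N ->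
  (y = y' %[mod m])%N.
Proof.
move=> h h'.
have e1 : (y = y * (x * y') %[mod m])%N.
  by rewrite -modnMmr h' modnMmr muln1.
have e2 : (y * (x * y') = y' %[mod m])%N.
  by rewrite mulnA (mulnC y) -modnMml h modnMml mul1n.
exact: cong_trans e1 e2.
Qed.

Lemma zaddmulE p (u a v b : nat -> nat) n :
  zadd p (zmul p u a) (zmul p v b) n = ((u n * a n + v n * b n) %% p ^ n)%N.
Proof. by rewrite /zadd /zmul modnDm. Qed.

Lemma construct_e p a1 a2 b1 b2 : prime p ->
  zp p a1 -> zp p a2 -> zp p b1 -> zp p b2 -> ~~ (p %| a1 1%N)%N ->
  zgen_unit_ideal p b1 b2 ->
  (forall n, (a1 n * b2 n = a2 n * b1 n %[mod p ^ n])%N) ->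
  exists e : nat -> nat,
    [/\ zp p e, zunit p e, zeq b1 (zmul p e a1) & zeq b2 (zmul p e a2)].
Proof.
move=> pp za1 za2 zb1 zb2 nd [u [v [zu [zv huv]]]] cross.
have hco : forall n, coprime (a1 n) (p ^ n).
  case=> [|n]; first by rewrite expn0 coprimen1.
  apply: coprimeXr; rewrite coprime_sym prime_coprime //.
  have := @zp_mod p a1 n.+1 1 za1 isT; rewrite expn1 /dvdn => ->; exact: nd.
set I := fun n => inv (a1 n) (p ^ n).
have hI : forall n, (a1 n * I n = 1 %[mod p ^ n])%N by move=> n; apply: invP.
pose e := fun n => ((b1 n * I n) %% p ^ n)%N.
have pdv : forall n, (p ^ n %| p ^ n.+1)%N by move=> n; apply: dvdn_exp2l.
have he1 : forall n, (e n * a1 n = b1 n %[mod p ^ n])%N.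
  move=> n; rewrite /e modnMml -mulnA (mulnC (I n)) -modnMmr hI modnMmr muln1 //.
have he2 : forall n, (e n * a2 n = b2 n %[mod p ^ n])%N.
  move=> n.
  apply: (@cong_trans _ _ (b1 n * I n * a2 n)%N); first by rewrite /e modnMml.
  rewrite (_ : (b1 n * I n * a2 n = I n * (a2 n * b1 n))%N); last first.
    by rewrite mulnAC mulnC (mulnC (b1 n)).
  apply: (@cong_trans _ _ (I n * (a1 n * b2 n))%N).
    by apply: cong_mul => //; rewrite cross.
  by rewrite mulnA (mulnC (I n)) -modnMml hI modnMml mul1n.
have ze : zp p e.
  move=> n; split; first by rewrite /e ltn_pmod // expn_gt0 prime_gt0.
  rewrite /e (modn_dvdm _ (pdv n)) modn_mod.
  apply: cong_mul; first by rewrite (proj2 (zb1 n)).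
  apply: (@inv_uniq _ (a1 n)); last exact: hI.
  have : (a1 n.+1 * I n.+1 = 1 %[mod p ^ n])%N by apply: cong_dvd (pdv n) (hI n.+1).
  apply: cong_trans; apply: cong_mul => //; by rewrite (proj2 (za1 n)).
exists e; split => //.
- exists (zadd p (zmul p u a1) (zmul p v a2)); split.
    move=> n; rewrite !zaddmulE; split; first by rewrite ltn_pmod // expn_gt0 prime_gt0.
    rewrite (modn_dvdm _ (pdv n)) modn_mod.
    apply: cong_add; apply: cong_mul; rewrite ?(proj2 (zu n)) ?(proj2 (zv n)) ?(proj2 (za1 n)) ?(proj2 (za2 n)) //.
  move=> n; rewrite /zmul -(huv n) zaddmulE.
  apply: (@cong_trans _ _ (e n * (u n * a1 n + v n * a2 n))%N).
    by rewrite zaddmulE modnMmr.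
  rewrite mulnDr !mulnA !(mulnC (e n)) -!mulnA.
  by apply: cong_add; apply: cong_mul.
- by move=> n; rewrite /zmul he1 modn_small // (proj1 (zb1 n)).
- by move=> n; rewrite /zmul he2 modn_small // (proj1 (zb2 n)).
Qed.

Lemma cross_rel (O : idomainType) (pi : O) (iota : (nat -> nat) -> O) p a1 a2 b1 b2 :
  prime p -> padic_int_ring p pi -> zp_embedding p iota ->
  zp p a1 -> zp p a2 -> zp p b1 -> zp p b2 ->
  (forall x : ps2 O,
     ideal2 (gamma_pow_m1 p iota a1 a2) (ps_const pi) x <->
     ideal2 (gamma_pow_m1 p iota b1 b2) (ps_const pi) x) ->
  forall N, (a1 N * b2 N = a2 N * b1 N %[mod p ^ N])%N.
Proof.
move=> pp hO hiota za1 za2 zb1 zb2 H N.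
have h := main_div N pp hO hiota za1 za2 zb1 zb2 H.
move: h; set K := (N.+1 + logn p (p ^ N)`!)%N; set M := (p ^ N)%N => h.
have M0 : (0 < M)%N by rewrite expn_gt0 prime_gt0.
have hK : (N <= K)%N by rewrite /K addSn ltnW // ltnS leq_addr.
have c1 : (a1 N * b2 N = a1 K * b2 K %[mod M])%N.
  by apply: cong_mul; apply/esym; apply: zp_mod.
have c2 : (a2 K * b1 K = a2 N * b1 N %[mod M])%N.
  by apply: cong_mul; apply: zp_mod.
apply: cong_trans c1 _; apply: cong_trans _ c2.
have e : (a2 K * b1 K + M * (a1 K * b2 K) =
          (a2 K * b1 K + (M - 1) * a1 K * b2 K) + a1 K * b2 K)%N.
  by rewrite -mulnA -addnA; congr (_ + _); rewrite -[in LHS](subnK M0) mulnDl mul1n.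
have e2 : (a2 K * b1 K + M * (a1 K * b2 K) = a2 K * b1 K %[mod M])%N.
  by rewrite addnC mulnC modnMDl.
rewrite -e2 e -modnDml (eqP h) add0n //.
Qed.

Lemma zgen_swap p b1 b2 : zgen_unit_ideal p b1 b2 -> zgen_unit_ideal p b2 b1.
Proof.
move=> [u [v [zu [zv h]]]]; exists v, u; split => //; split => // n.
by rewrite -h /zadd addnC.
Qed.

Lemma unimod_split p a1 a2 : prime p -> zgen_unit_ideal p a1 a2 ->
  ~~ (p %| a1 1%N)%N \/ ~~ (p %| a2 1%N)%N.
Proof.
move=> pp [u [v [_ [_ h]]]].
case: (boolP (p %| a1 1%N)%N) => h1; last by left.
case: (boolP (p %| a2 1%N)%N) => h2; last by right.
exfalso.
have := h 1%N; rewrite zaddmulE /zone expn1 => e.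
have : (p %| u 1%N * a1 1%N + v 1%N * a2 1%N)%N by rewrite dvdn_add // dvdn_mull.
rewrite /dvdn e => /eqP; rewrite modn_small ?prime_gt1 //.
Qed.

Unset Implicit Arguments.

Theorem lemma6p4 (p : nat) (O : idomainType) (pi : O) (iota : (nat -> nat) -> O)
  (a1 a2 b1 b2 : nat -> nat) :
  prime p -> padic_int_ring p pi -> zp_embedding p iota ->
  zp p a1 -> zp p a2 -> zp p b1 -> zp p b2 ->
  zgen_unit_ideal p a1 a2 -> zgen_unit_ideal p b1 b2 ->
  (forall x : ps2 O,
     ideal2 (gamma_pow_m1 p iota a1 a2) (ps_const pi) x <->
     ideal2 (gamma_pow_m1 p iota b1 b2) (ps_const pi) x) ->
  exists e : nat -> nat,
    [/\ zp p e, zunit p e, zeq b1 (zmul p e a1) & zeq b2 (zmul p e a2)].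
Proof.
move=> pp hO hiota za1 za2 zb1 zb2 ga gb H.
have cross := cross_rel pp hO hiota za1 za2 zb1 zb2 H.
case: (unimod_split pp ga) => nd.
  exact: construct_e pp za1 za2 zb1 zb2 nd gb cross.
have [e [ze ue h2 h1]] : exists e : nat -> nat,
    [/\ zp p e, zunit p e, zeq b2 (zmul p e a2) & zeq b1 (zmul p e a1)].
  apply: construct_e pp za2 za1 zb2 zb1 nd (zgen_swap gb) _.
  by move=> n; apply/esym; apply: cross.
by exists e.
Qed.
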